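(* $\mathfrak{s}\leq\mathfrak{s}(\mathbb{R})$.
   Context: For infinite sets $U, A$, say $U$ splits $A$ if both $A\cap U$ and $A\setminus U$ are infinite. $\mathfrak{s}$ is the splitting number: the smallest cardinality of a family $\mathcal{F}$ of subsets of $\mathbb{N}$ such that every infinite subset of $\mathbb{N}$ is split by some member of $\mathcal{F}$. $\mathfrak{s}(\mathbb{R})$ is the smallest cardinality of a family $\mathcal{U}$ of open subsets of $\mathbb{R}$ (usual topology) such that every infinite $A\subseteq\mathbb{R}$ is split by some $U\in\mathcal{U}$. *)

(* Defs.v *)
From mathcomp Require Import all_boot all_order all_algebra.
From mathcomp Require Import all_classical all_reals all_analysis.
Import numFieldNormedType.Exports.
Local Open Scope classical_set_scope.

Definition splits {T : Type} (U A : set T) : Prop :=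
  infinite_set (A `&` U) /\ infinite_set (A `\` U).

Definition splitting_family {T : Type} (F : set (set T)) : Prop :=
  forall A : set T, infinite_set A -> exists2 U, F U & splits U A.

(* Main.v *)
Require Import Defs.
From mathcomp Require Import all_boot all_order all_algebra.
From mathcomp Require Import all_classical all_reals all_analysis.
Import numFieldNormedType.Exports.
Local Open Scope classical_set_scope.
Local Open Scope card_scope.

Theorem lemma2p7 (R : realType) (UU : set (set R)) :
  (forall U, UU U -> open U) -> splitting_family UU ->
  exists F : set (set nat), splitting_family F /\ (F #<= UU).
Proof.
move=> _ sUU.
pose x := fun n : nat => (n%:R : R)%R.
have xinj : injective x by move=> m n /eqP; rewrite Num.Theory.eqr_nat => /eqP.
exists [set (x @^-1` U) | U in UU]; split; last exact: card_image_le.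
move=> A Ainf.
have xAinf : infinite_set (x @` A).
  move=> fin; apply: Ainf; apply: card_le_finite fin.
  have /card_eqPle[_ //] : x @` A #= A.
  by apply: inj_card_eq => a b _ _; apply: xinj.
have [U UUU [s1 s2]] := sUU _ xAinf.
exists (x @^-1` U); first by exists U.
split.
- move=> fin; apply: s1; apply: sub_finite_set (finite_image x fin).
  by move=> _ [[a Aa <-] Ua]; exists a.
- move=> fin; apply: s2; apply: sub_finite_set (finite_image x fin).
  by move=> _ [[a Aa <-] Ua]; exists a.
Qed.
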